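(* Let $\ell\ge 1$ and $n$ be positive integers and let $\mathcal{C}$ be a family of $(\ell+1)$-subsets of $[n]$. Then $\mathcal{C}$ satisfies the condition (C$_{\ell+1}$): if $C_1, C_2 \in \mathcal{C}$ and $|C_1\cup C_2| = \ell+2$, then every $(\ell+1)$-subset $C_3$ of $C_1\cup C_2$ belongs to $\mathcal{C}$, if and only if there exists an $\ell$-generic matroid on $[n]$ whose family of all $(\ell+1)$-circuits is equal to $\mathcal{C}$.
   Context: $[n]=\{1,\ldots,n\}$. A matroid is $\ell$-generic if it has no circuits of cardinality $i$ for any $i\le\ell$. An $(\ell+1)$-circuit is a circuit of cardinality $\ell+1$. *)

(* Defs.v *)
From mathcomp Require Import all_boot.
Set Implicit Arguments. Unset Strict Implicit. Unset Printing Implicit Defensive.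

Definition matroid_circuits (T : finType) (Cs : {set {set T}}) : Prop :=
  [/\ set0 \notin Cs,
      (forall C1 C2, C1 \in Cs -> C2 \in Cs -> C1 \subset C2 -> C1 = C2) &
      (forall C1 C2 e, C1 \in Cs -> C2 \in Cs -> C1 != C2 -> e \in C1 :&: C2 ->
         exists2 C3, C3 \in Cs & C3 \subset (C1 :|: C2) :\ e)].

Definition generic (T : finType) (l : nat) (Cs : {set {set T}}) : Prop :=
  forall C, C \in Cs -> l < #|C|.

Definition circuits_of_size (T : finType) (k : nat) (Cs : {set {set T}}) : {set {set T}} :=
  [set C in Cs | #|C| == k].

Definition cond_C (T : finType) (l : nat) (F : {set {set T}}) : Prop :=
  forall C1 C2, C1 \in F -> C2 \in F -> #|C1 :|: C2| = l.+2 ->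
    forall C3 : {set T}, C3 \subset C1 :|: C2 -> #|C3| = l.+1 -> C3 \in F.

(* Main.v *)
Require Import Defs.
From mathcomp Require Import all_boot.

Lemma sub_of_card (T : finType) (A : {set T}) k :
  k <= #|A| -> exists2 B : {set T}, B \subset A & #|B| = k.
Proof.
move/card_geqP=> [s [us ss sA]].
exists [set x in s].
  by apply/subsetP=> x; rewrite inE => /sA.
by rewrite cardsE (card_uniqP us).
Qed.

Theorem lemma2p2 (l n : nat) (hl : 1 <= l) (hn : 0 < n)
  (F : {set {set 'I_n}}) (hF : forall C, C \in F -> #|C| = l.+1) :
  cond_C l F <->
  exists Cs : {set {set 'I_n}},
    [/\ matroid_circuits Cs, generic l Cs & circuits_of_size l.+1 Cs = F].
Proof.
split.
- move=> hC.
  set Cs := F :|: [set S : {set 'I_n} | (#|S| == l.+2) && [forall C in F, ~~ (C \subset S)]].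
  have memCs : forall S, (S \in Cs) = (S \in F) || ((#|S| == l.+2) && [forall C in F, ~~ (C \subset S)]).
    by move=> S; rewrite !inE.
  have szCs : forall S, S \in Cs -> l < #|S|.
    move=> S; rewrite memCs => /orP [/hF -> //| /andP [/eqP -> _]]; by [].
  have big : forall U : {set 'I_n}, l.+2 <= #|U| -> exists2 C, C \in Cs & C \subset U.
    move=> U /sub_of_card [S SU cS].
    case: (boolP [forall C in F, ~~ (C \subset S)]) => h.
      by exists S => //; rewrite memCs cS eqxx h orbT.
    move: h; rewrite negb_forall => /existsP [C]; rewrite negb_imply negbK => /andP [CF CS].
    exists C; first by rewrite memCs CF.
    exact: subset_trans CS SU.
  have clutter : forall C1 C2, C1 \in Cs -> C2 \in Cs -> C1 \subset C2 -> C1 = C2.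
    move=> C1 C2; rewrite !memCs => H1 H2 sub.
    case/orP: H1 => [h1|/andP [/eqP c1 f1]]; case/orP: H2 => [h2|/andP [/eqP c2 f2]].
    + by apply/eqP; rewrite eqEcard sub (hF _ h1) (hF _ h2) leqnn.
    + by move/forall_inP: f2 => /(_ _ h1); rewrite sub.
    + by move: (subset_leq_card sub); rewrite c1 (hF _ h2) ltnn.
    + by apply/eqP; rewrite eqEcard sub c1 c2 leqnn.
  exists Cs; split.
  + split.
    * by apply/negP => /szCs; rewrite cards0.
    * exact: clutter.
    * move=> C1 C2 e h1 h2 neq eI.
      have eU : e \in C1 :|: C2 by rewrite inE; move: eI; rewrite inE => /andP [-> _].
      have cU := cardsD1 e (C1 :|: C2); rewrite eU /= in cU.
      have lt1 : #|C1| < #|C1 :|: C2|.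
        apply: proper_card; rewrite properEneq subsetUl andbT.
        apply/negP=> /eqP E; move/eqP: neq; apply; apply/esym.
        by apply: (clutter _ _ h2 h1); rewrite E subsetUr.
      have lt2 : #|C2| < #|C1 :|: C2|.
        apply: proper_card; rewrite properEneq subsetUr andbT.
        apply/negP=> /eqP E; move/eqP: neq; apply.
        by apply: (clutter _ _ h1 h2); rewrite E subsetUl.
      have s1 := szCs _ h1; have s2 := szCs _ h2.
      case: (ltnP (l.+2) #|C1 :|: C2|) => hu.
        by apply: big; move: hu; rewrite cU add1n ltnS.
      have e1 : #|C1| = l.+1.
        by apply/eqP; rewrite eqn_leq s1 -ltnS (leq_trans lt1 hu).
      have e2 : #|C2| = l.+1.
        by apply/eqP; rewrite eqn_leq s2 -ltnS (leq_trans lt2 hu).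
      have f1 : C1 \in F.
        by move: h1; rewrite memCs e1 => /orP [//| /andP [/eqP /n_Sn]].
      have f2 : C2 \in F.
        by move: h2; rewrite memCs e2 => /orP [//| /andP [/eqP /n_Sn]].
      have eu : #|C1 :|: C2| = l.+2 by apply/eqP; rewrite eqn_leq hu (leq_trans _ lt1) // e1.
      exists ((C1 :|: C2) :\ e) => //.
      rewrite memCs; apply/orP; left.
      apply: (hC _ _ f1 f2 eu); first exact: subsetDl.
      by move: cU; rewrite eu => -[].
  + by move=> C /szCs.
  + apply/setP=> S; rewrite !inE.
    case: (boolP (S \in F)) => SF /=; first by rewrite (hF _ SF) eqxx.
    case: (#|S| =P l.+1) => [->|_]; last by rewrite andbF.
    by rewrite eqSS (ltn_eqF (ltnSn l)).
- move=> [Cs [[h0 hcl hel] hg <-]] C1 C2.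
  rewrite !inE => /andP [c1 /eqP s1] /andP [c2 /eqP s2] hu C3 sub s3.
  rewrite inE s3 eqxx andbT.
  have neq : C1 != C2.
    by apply/eqP=> E; move: hu; rewrite E setUid s2 => /n_Sn.
  have [x xU xC3] : exists2 x, x \in C1 :|: C2 & x \notin C3.
    apply/exists_inP; rewrite -negb_forall_in; apply/negP=> /forall_inP H.
    have : C1 :|: C2 \subset C3 by apply/subsetP=> y /H.
    by move/subset_leq_card; rewrite hu s3 ltnn.
  have C3E : C3 = (C1 :|: C2) :\ x.
    apply/eqP; rewrite eqEcard; apply/andP; split.
      by apply/subsetP=> y yC; rewrite in_setD1 (subsetP sub _ yC) andbT; apply/eqP=> E; move: xC3; rewrite -E yC.
    by have := cardsD1 x (C1 :|: C2); rewrite xU hu s3 => -[->].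
  have subx : forall C : {set 'I_n}, C \subset C1 :|: C2 -> #|C| = l.+1 -> x \notin C -> C = C3.
    move=> C sC cC xC; apply/eqP; rewrite eqEcard cC s3 leqnn andbT C3E.
    by apply/subsetP=> y yC; rewrite in_setD1 (subsetP sC _ yC) andbT; apply/eqP=> E; move: xC; rewrite -E yC.
  case: (boolP (x \in C1)) => x1; last by rewrite -(subx _ (subsetUl _ _) s1 x1).
  case: (boolP (x \in C2)) => x2; last by rewrite -(subx _ (subsetUr _ _) s2 x2).
  have [C' C'in C'sub] := hel _ _ _ c1 c2 neq (introT setIP (conj x1 x2) : x \in C1 :&: C2).
  have : C' = C3.
    apply/eqP; rewrite eqEcard C3E C'sub /= -C3E s3; exact: hg.
  by move=> <-.
Qed.
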